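(* Let $X=X_1\times\dots\times X_n$ with $|X_i|=2$ for every $i\in N$, and let $\langle\mathcal A,\mathcal U\rangle$ be a twofold partition of $X$ satisfying the standing assumptions. Then the following are equivalent: (a) $\langle\mathcal A,\mathcal U\rangle$ has a representation in Model $F^{c}$; (b) it has a representation in Model $F$; (c) it has a representation in Model $E$.
   Context: Setting. $N=\{1,\dots,n\}$, $n\ge 2$; $X=X_1\times\dots\times X_n$ with each $X_i$ finite. $(y_i,x_{-i})$ denotes $x$ with $i$-th coordinate replaced by $y_i$. A twofold partition $\langle\mathcal A,\mathcal U\rangle$ of $X$: disjoint, union $X$. Standing assumptions: every attribute $i$ is influential (exist $x_i,y_i,a_{-i}$ with $(x_i,a_{-i})\in\mathcal A$, $(y_i,a_{-i})\in\mathcal U$), and $\succsim_i$ on $X_i$, defined by $x_i\succsim_i y_i$ iff [for all $a_{-i}$, $(y_i,a_{-i})\in\mathcal A\Rightarrow(x_i,a_{-i})\in\mathcal A$], is antisymmetric. Semiorders: a semiorder on $Y$ is a reflexive, Ferrers ($xSy, zSw\Rightarrow xSw$ or $zSy$) and semitransitive ($xSy, ySz\Rightarrow xSw$ or $wSz$) relation; its induced weak order is $x S^{wo} y$ iff for all $z$, [$ySz\Rightarrow xSz$] and [$zSx\Rightarrow zSy$]. Common data of Models $E$ and $F$: for each $i$ a semiorder $S_i$ on $X_i$ (asymmetric part $P_i$) and a semiorder $U_i$ whose asymmetric part $V_i\subseteq P_i$, with $S_i^{wo}\cap U_i^{wo}$ complete; an up-closed family $\mathcal F\subseteq 2^N$;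 the relation $xSy$ iff $\{i:x_iS_iy_i\}\in\mathcal F$ and $\{i:y_iV_ix_i\}=\varnothing$, with asymmetric part $P$; a set $\mathcal P\subseteq X$ with no $p,q\in\mathcal P$ satisfying $pPq$. Model $E$: for all $x$, $x\in\mathcal A$ iff [$xSp$ for some $p\in\mathcal P$ and not $qPx$ for all $q\in\mathcal P$]. Model $F$: for all $x$, $x\in\mathcal U$ iff [$pPx$ for some $p\in\mathcal P$ and not $xPq$ for all $q\in\mathcal P$]. $F^{c}$: $F$ with a representation in which all $V_i$ are empty. *)

(* Defs.v *)
From mathcomp Require Import all_boot.
Set Implicit Arguments. Unset Strict Implicit. Unset Printing Implicit Defensive.

Section Defs.
Variables (n : nat) (T : 'I_n -> finType).

Definition prof := {dffun forall i : 'I_n, T i}.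

Definition upd (x : prof) (i : 'I_n) (y : T i) : prof :=
  [ffun j => dfwith (fun k => x k) y j].

Section Rel.
Variable Y : Type.
Implicit Types R : Y -> Y -> Prop.
Definition asym_part R : Y -> Y -> Prop := fun x y => R x y /\ ~ R y x.
Definition is_semiorder R : Prop :=
  [/\ (forall x, R x x),
      (forall x y z w, R x y -> R z w -> R x w \/ R z y) &
      (forall x y z w, R x y -> R y z -> R x w \/ R w z)].
Definition induced_wo R : Y -> Y -> Prop :=
  fun x y => forall z, (R y z -> R x z) /\ (R z x -> R z y).
Definition complete_rel R : Prop := forall x y, R x y \/ R y x.
End Rel.

Definition influential (A : {set prof}) : Prop :=
  forall i : 'I_n, exists (xi yi : T i) (a : prof),
    upd a xi \in A /\ upd a yi \notin A.

Definition pref_i (A : {set prof}) (i : 'I_n) (xi yi : T i) : Prop :=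
  forall a : prof, upd a yi \in A -> upd a xi \in A.

Definition standing (A : {set prof}) : Prop :=
  influential A /\
  forall i (xi yi : T i), pref_i A xi yi -> pref_i A yi xi -> xi = yi.

Variables (S U : forall i : 'I_n, rel (T i)) (F : {set {set 'I_n}})
          (PP : {set prof}).

Definition Pi i : T i -> T i -> Prop := asym_part (fun a b : T i => S a b).
Definition Vi i : T i -> T i -> Prop := asym_part (fun a b : T i => U a b).

Definition Srel (x y : prof) : Prop :=
  [set i | S (x i) (y i)] \in F /\ (forall i, ~ Vi (y i) (x i)).
Definition Prel : prof -> prof -> Prop := asym_part Srel.

Definition common_data : Prop :=
  [/\ (forall i, is_semiorder (fun a b : T i => S a b)),
       (forall i, is_semiorder (fun a b : T i => U a b)),
       (forall i (a b : T i), Vi a b -> Pi a b),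
       (forall i, complete_rel (fun a b : T i =>
          induced_wo (fun c d : T i => S c d) a b /\
          induced_wo (fun c d : T i => U c d) a b)) &
       (forall B C : {set 'I_n}, B \in F -> B \subset C -> C \in F) /\
       (forall p q, p \in PP -> q \in PP -> ~ Prel p q)].

Definition modelE_eq (A : {set prof}) : Prop :=
  forall x, x \in A <->
    ((exists2 p, p \in PP & Srel x p) /\ (forall q, q \in PP -> ~ Prel q x)).

(* x in U (= complement of A) iff ... *)
Definition modelF_eq (A : {set prof}) : Prop :=
  forall x, x \notin A <->
    ((exists2 p, p \in PP & Prel p x) /\ (forall q, q \in PP -> ~ Prel x q)).

Definition all_V_empty : Prop := forall i (a b : T i), ~ Vi a b.
End Defs.

Definition repr_E n (T : 'I_n -> finType) (A : {set prof T}) : Prop :=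
  exists S U F PP, common_data S U F PP /\ modelE_eq S U F PP A.
Definition repr_F n (T : 'I_n -> finType) (A : {set prof T}) : Prop :=
  exists S U F PP, common_data S U F PP /\ modelF_eq S U F PP A.
Definition repr_Fc n (T : 'I_n -> finType) (A : {set prof T}) : Prop :=
  exists S U F PP, [/\ common_data S U F PP, all_V_empty U & modelF_eq S U F PP A].

(* Main.v *)
Require Import Defs.
From mathcomp Require Import all_boot.
From Stdlib Require Import Classical.
Set Implicit Arguments. Unset Strict Implicit. Unset Printing Implicit Defensive.

Lemma card2_three (X : finType) (a b c : X) : #|X| = 2 -> a = b \/ b = c \/ a = c.
Proof.
move=> hT.
case: (eqVneq a b) => [->|hab]; first by left.
case: (eqVneq b c) => [->|hbc]; first by right; left.
case: (eqVneq a c) => [->|hac]; first by right; right.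
have hu : uniq [:: a; b; c] by rewrite /= !inE negb_or hab hac hbc.
have := max_card (mem [:: a; b; c]).
by rewrite (card_uniqP hu) hT.
Qed.

Lemma trans2 (X : finType) (s : rel X) (a b c : X) :
  #|X| = 2 -> (forall x, s x x) -> s a b -> s b c -> s a c.
Proof.
move=> h2 hr hab hbc.
by case: (card2_three a b c h2) => [e|[e|e]]; subst.
Qed.

Lemma c2 (X : finType) (s u : rel X) (z x q : X) :
  #|X| = 2 -> (forall a b, asym_part (fun a b => u a b) a b -> asym_part (fun a b => s a b) a b) ->
  s z x -> ~ asym_part (fun a b => u a b) q x -> ~ asym_part (fun a b => u a b) q z.
Proof.
move=> h2 hv hzx hn hqz.
case: (card2_three q z x h2) => [e|[e|e]]; subst.
- by case: hqz.
- by [].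
- by case: (hv _ _ hqz).
Qed.

Lemma c4 (X : finType) (s u : rel X) (z x q : X) :
  #|X| = 2 -> (forall a b, asym_part (fun a b => u a b) a b -> asym_part (fun a b => s a b) a b) ->
  s z x -> ~ asym_part (fun a b => u a b) z q -> ~ asym_part (fun a b => u a b) x q.
Proof.
move=> h2 hv hzx hn hxq.
case: (card2_three x z q h2) => [e|[e|e]]; subst.
- by [].
- by case: (hv _ _ hxq).
- by case: hxq.
Qed.

Definition dom n (T : 'I_n -> finType) (S : forall i, rel (T i)) (z x : prof T) :=
  forall i, S i (z i) (x i).

Unset Implicit Arguments.
Section L.
Variables (n : nat) (T : 'I_n -> finType) (S U : forall i, rel (T i))
  (F : {set {set 'I_n}}).
Hypothesis h2 : forall i, #|T i| = 2.
Hypothesis hr : forall i (a : T i), S i a a.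
Hypothesis hv : forall i (a b : T i), Vi U a b -> Pi S a b.
Hypothesis hF : forall B C : {set 'I_n}, B \in F -> B \subset C -> C \in F.

Lemma L1 (z x q : prof T) : dom S z x -> Srel S U F x q -> Srel S U F z q.
Proof.
move=> hd [hD hV]; split.
- apply: hF hD _; apply/subsetP => i; rewrite !inE => h.
  exact: (trans2 (h2 i) (hr i) (hd i) h).
- move=> i; apply: (c2 (h2 i) _ (hd i) (hV i)) => a b; exact: hv.
Qed.

Lemma L2 (z x q : prof T) : dom S z x -> Srel S U F q z -> Srel S U F q x.
Proof.
move=> hd [hD hV]; split.
- apply: hF hD _; apply/subsetP => i; rewrite !inE => h.
  exact: (trans2 (h2 i) (hr i) h (hd i)).
- move=> i; apply: (c4 (h2 i) _ (hd i) (hV i)) => a b; exact: hv.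
Qed.

Lemma P2 (z x p : prof T) : dom S z x -> Prel S U F p z -> Prel S U F p x.
Proof.
move=> hd [h1 h2']; split; first exact: L2 hd h1.
by move=> h; apply: h2'; apply: L1 hd h.
Qed.

Lemma P1 (z x q : prof T) : dom S z x -> Prel S U F x q -> Prel S U F z q.
Proof.
move=> hd [h1 h2']; split; first exact: L1 hd h1.
by move=> h; apply: h2'; apply: L2 hd h.
Qed.
End L.
Set Implicit Arguments.

Lemma fromF n (T : 'I_n -> finType) S U F PP (A : {set prof T}) :
  (forall i, #|T i| = 2) -> common_data S U F PP -> modelF_eq S U F PP A ->
  forall x z, dom S z x -> x \in A -> z \in A.
Proof.
move=> h2 [hS hU hVP hC [hF hPP]] hM x z hd hx.
have hr : forall i (a : T i), S i a a by move=> i a; case: (hS i).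
apply/negPn/negP => hz.
have [[p hp hpz] hq] := (hM z).1 hz.
have : x \notin A.
  apply/(hM x).2; split.
  - exists p => //; exact: (P2 _ _ _ _ _ h2 hr hVP hF _ _ _ hd hpz).
  - move=> q hq' hxq; apply: (hq q hq'); exact: (P1 _ _ _ _ _ h2 hr hVP hF _ _ _ hd hxq).
by rewrite hx.
Qed.

Lemma fromE n (T : 'I_n -> finType) S U F PP (A : {set prof T}) :
  (forall i, #|T i| = 2) -> common_data S U F PP -> modelE_eq S U F PP A ->
  forall x z, dom S z x -> x \in A -> z \in A.
Proof.
move=> h2 [hS hU hVP hC [hF hPP]] hM x z hd hx.
have hr : forall i (a : T i), S i a a by move=> i a; case: (hS i).
have [[p hp hxp] hq] := (hM x).1 hx.
apply/(hM z).2; split.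
- exists p => //; exact: (L1 _ _ _ _ _ h2 hr hVP hF _ _ _ hd hxp).
- move=> q hq' hqz; apply: (hq q hq'); exact: (P2 _ _ _ _ _ h2 hr hVP hF _ _ _ hd hqz).
Qed.

Lemma construct n (T : 'I_n -> finType) (A : {set prof T}) (S : forall i, rel (T i))
  (a0 : prof T) :
  (forall i, #|T i| = 2) -> a0 \in A -> (forall i, is_semiorder (fun a b : T i => S i a b)) ->
  (forall x z, dom S z x -> x \in A -> z \in A) -> repr_Fc A /\ repr_E A.
Proof.
move=> h2 ha0 hS mono.
have hr : forall i (a : T i), S i a a by move=> i a; case: (hS i).
have hc : forall i (a b : T i), S i a b \/ S i b a.
  move=> i a b; case: (hS i) => _ hf _; exact: hf _ _ _ _ (hr i a) (hr i b).
have ht : forall i (a b c : T i), S i a b -> S i b c -> S i a c.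
  move=> i a b c; exact: trans2 (h2 i) (hr i).
have htop : forall i, exists t : T i, [forall b, S i t b].
  move=> i; case: (classic (forall b, S i (a0 i) b)) => h.
    by exists (a0 i); apply/forallP.
  have [b hb] := not_all_ex_not _ _ h.
  have hba : S i b (a0 i) by case: (hc i (a0 i) b).
  exists b; apply/forallP => c.
  case: (card2_three (a0 i) b c (h2 i)) => [e|[e|e]].
  - by rewrite e hr in hb.
  - by rewrite e hr.
  - by rewrite -e.
pose top : prof T := [ffun i => xchoose (htop i)].
have topP : forall i b, S i (top i) b.
  by move=> i b; rewrite ffunE; move: (xchooseP (htop i)) => /forallP.
pose D := fun x : prof T => [set i | S i (x i) (top i)].
pose FF := [set B : {set 'I_n} | [exists y in A, D y \subset B]].
have key : forall x, x \in A <-> D x \in FF.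
  move=> x; split.
    by move=> hx; rewrite inE; apply/existsP; exists x; rewrite hx subxx.
  rewrite inE => /existsP [y /andP [hy hsub]].
  apply: (mono y x) hy => i.
  case: (boolP (S i (y i) (top i))) => hyt.
    have : i \in D x by apply: (subsetP hsub); rewrite inE.
    rewrite inE => hxt; exact: ht hxt (topP i (y i)).
  case: (card2_three (x i) (y i) (top i) (h2 i)) => [e|[e|e]].
  - by rewrite e.
  - by rewrite e hr in hyt.
  - by rewrite e.
have hT : setT \in FF.
  by rewrite inE; apply/existsP; exists a0; rewrite ha0 subsetT.
pose U0 := fun i => (fun _ _ => true) : rel (T i).
have noV : forall i (a b : T i), ~ Vi U0 a b by move=> i a b [].
have hTx : forall x, Srel S U0 FF top x.
  move=> x; split; last by move=> i; exact: noV.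
  have -> : [set i | S i (top i) (x i)] = setT by apply/setP => i; rewrite !inE topP.
  exact: hT.
have hxT : forall x, Srel S U0 FF x top <-> D x \in FF.
  move=> x; split; first by case.
  by move=> h; split => // i; exact: noV.
have cd : common_data S U0 FF [set top].
  split.
  - by [].
  - by move=> i; split => //; move=> *; left.
  - by move=> i a b /noV.
  - move=> i a b; case: (hc i a b) => h; [left|right]; (split; last by move=> z; split);
      move=> z; split => h'; eauto.
  - split.
      move=> B C; rewrite !inE => /existsP [y /andP [hy hs]] hBC.
      by apply/existsP; exists y; rewrite hy (subset_trans hs hBC).
    by move=> p q /set1P -> /set1P -> [].
split.
- exists S, U0, FF, [set top]; split => // x; split.
  + move=> hx; split.
      exists top; first exact: set11.
      split; first exact: hTx.
      by move=> /hxT /key; apply/negP.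
    by move=> q /set1P -> [_ h]; apply: h; exact: hTx.
  + move=> [[p /set1P -> [_ hn]] _]; apply/negP => hx; apply: hn.
    by apply/hxT/key.
- exists S, U0, FF, [set top]; split => // x; split.
  + move=> hx; split.
      by exists top; [exact: set11 | apply/hxT/key].
    by move=> q /set1P -> [_ h]; apply: h; apply/hxT/key.
  + by move=> [[p /set1P -> /hxT /key]].
Qed.

Theorem proposition3 (n : nat) (T : 'I_n -> finType) (A : {set prof T}) :
  2 <= n ->
  (forall i, #|T i| = 2) ->
  standing A ->
  (repr_Fc A <-> repr_F A) /\ (repr_F A <-> repr_E A).
Proof.
move=> hn h2 [hinf _].
have [xi [yi [a [ha _]]]] := hinf (Ordinal (leq_trans (isT : 0 < 2) hn)).
have FcF : repr_Fc A -> repr_F A.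
  by move=> [S [U [F [PP [hc _ hm]]]]]; exists S, U, F, PP.
have FFc : repr_F A -> repr_Fc A /\ repr_E A.
  move=> [S [U [F [PP [hc hm]]]]].
  apply: (construct (S := S) h2 ha); first by case: hc.
  exact: fromF h2 hc hm.
split; split => //.
- by move=> /FFc [].
- by move=> /FFc [].
- move=> [S [U [F [PP [hc hm]]]]]; apply: FcF.
  have [] // := construct (S := S) h2 ha _ (fromE h2 hc hm).
  by case: hc.
Qed.
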